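(* For any $x\in\mathrm{St}(d,r)^\epsilon$ and $x'=\mathrm{Proj}_{\mathrm{St}}(x)$, we have $\langle\nabla\mathcal{L}(x'),x-x'\rangle=0$.
   Context: $\langle A,B\rangle=\mathrm{Tr}(AB^\top)$; $\mathrm{sym}(A)=\frac12(A+A^\top)$; $\|\cdot\|_F$ Frobenius norm. $\mathrm{St}(d,r)=\{x\in\mathbb{R}^{d\times r}:x^\top x=I_r\}$; for $\epsilon\in(0,3/4)$, $\mathrm{St}(d,r)^\epsilon=\{x:\|x^\top x-I_r\|_F\le\epsilon\}$. $\mathrm{Proj}_{\mathrm{St}}(x)$ is the Frobenius-norm projection of $x$ onto $\mathrm{St}(d,r)$ (for $x$ of full column rank with thin SVD $x=USV^\top$ it equals $UV^\top$). $f:\mathbb{R}^{d\times r}\to\mathbb{R}$ is $C^2$, $\gamma>0$, and the merit function is $\mathcal{L}(x)=f(x)-\frac12\langle\mathrm{sym}(x^\top\nabla f(x)),x^\top x-I_r\rangle+\frac\gamma4\|x^\top x-I_r\|_F^2$. *)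

(* Defs.v *)
From HB Require Import structures.
From mathcomp Require Import all_boot all_order all_algebra.
From mathcomp Require Import all_classical all_reals all_analysis.
Set Implicit Arguments. Unset Strict Implicit. Unset Printing Implicit Defensive.
Import Order.TTheory GRing.Theory Num.Theory.
Import numFieldNormedType.Exports.
Local Open Scope ring_scope.

Section Defs.
Variable R : realType.

Definition mdot (m n : nat) (A B : 'M[R]_(m, n)) : R := \tr (A *m B^T).

Definition msym (n : nat) (A : 'M[R]_n) : 'M[R]_n := 2^-1 *: (A + A^T).

Definition frob (m n : nat) (A : 'M[R]_(m, n)) : R := Num.sqrt (mdot A A).

Variables d r : nat.

Definition stiefel (x : 'M[R]_(d, r)) : Prop := x^T *m x = 1%:M.

Definition stiefel_eps (eps : R) (x : 'M[R]_(d, r)) : Prop :=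
  frob (x^T *m x - 1%:M) <= eps.

Definition is_proj_St (x x' : 'M[R]_(d, r)) : Prop :=
  stiefel x' /\ forall y, stiefel y -> frob (x - x') <= frob (x - y).

Definition grad (F : 'M[R]_(d, r) -> R) (x : 'M[R]_(d, r)) : 'M[R]_(d, r) :=
  \matrix_(i < d, j < r) 'D_(delta_mx i j) F x.

Definition C2 (f : 'M[R]_(d, r) -> R) : Prop :=
  (forall x, differentiable f x) /\
  (forall x, differentiable (grad f) x) /\
  (forall w : 'M[R]_(d, r), continuous (fun x => 'D_w (grad f) x)).

Definition merit (f : 'M[R]_(d, r) -> R) (gamma : R) (x : 'M[R]_(d, r)) : R :=
  f x - 2^-1 * mdot (msym (x^T *m grad f x)) (x^T *m x - 1%:M)
  + gamma / 4 * (frob (x^T *m x - 1%:M)) ^+ 2.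

End Defs.

(* Main.v *)
Require Import Defs.
From HB Require Import structures.
From mathcomp Require Import all_boot all_order all_algebra.
From mathcomp Require Import all_classical all_reals all_analysis.
From mathcomp Require Import ring lra.
Import Order.TTheory GRing.Theory Num.Theory.
Import numFieldNormedType.Exports.
Local Open Scope ring_scope.

Set Implicit Arguments. Unset Strict Implicit.
Section Alg.
Variable R : realType.

Lemma mdotE m n (A B : 'M[R]_(m, n)) : mdot A B = \sum_i \sum_j A i j * B i j.
Proof.
rewrite /mdot /mxtrace; apply: eq_bigr => i _; rewrite mxE.
by apply: eq_bigr => j _; rewrite mxE.
Qed.

Lemma mdot_ge0 m n (A : 'M[R]_(m, n)) : 0 <= mdot A A.
Proof.
rewrite mdotE; apply: sumr_ge0 => i _; apply: sumr_ge0 => j _.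
by rewrite -expr2 sqr_ge0.
Qed.

Lemma mdotDl m n (A B C : 'M[R]_(m, n)) : mdot (A + B) C = mdot A C + mdot B C.
Proof. by rewrite /mdot mulmxDl mxtraceD. Qed.
Lemma mdotDr m n (A B C : 'M[R]_(m, n)) : mdot C (A + B) = mdot C A + mdot C B.
Proof. by rewrite /mdot linearD /= mulmxDr mxtraceD. Qed.
Lemma mdotNl m n (A C : 'M[R]_(m, n)) : mdot (- A) C = - mdot A C.
Proof. by rewrite /mdot mulNmx raddfN. Qed.
Lemma mdotNr m n (A C : 'M[R]_(m, n)) : mdot C (- A) = - mdot C A.
Proof. by rewrite /mdot linearN /= mulmxN raddfN. Qed.
Lemma mdotZl m n c (A C : 'M[R]_(m, n)) : mdot (c *: A) C = c * mdot A C.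
Proof. by rewrite /mdot -scalemxAl mxtraceZ. Qed.
Lemma mdotZr m n c (A C : 'M[R]_(m, n)) : mdot C (c *: A) = c * mdot C A.
Proof. by rewrite /mdot linearZ /= -scalemxAr mxtraceZ. Qed.
Lemma mdotC m n (A C : 'M[R]_(m, n)) : mdot A C = mdot C A.
Proof. by rewrite /mdot -mxtrace_tr trmx_mul trmxK. Qed.
Lemma mdot0r m n (A : 'M[R]_(m, n)) : mdot A 0 = 0.
Proof. by rewrite /mdot trmx0 mulmx0 mxtrace0. Qed.

Lemma tr_mul_delta m n (K : 'M[R]_(m, n)) (a : 'I_n) (b : 'I_m) :
  \tr (K *m delta_mx a b) = K b a.
Proof.
rewrite /mxtrace (bigD1 b) //= big1 ?addr0.
  rewrite mxE (bigD1 a) //= big1 ?addr0; first by rewrite mxE !eqxx mulr1.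
  by move=> k /negPf kb; rewrite mxE kb mulr0.
move=> k /negPf kb; rewrite mxE big1 // => l _; rewrite mxE.
by rewrite [k == b]kb andbF mulr0.
Qed.

Lemma quad_zero (a b : R) : (forall t : R, t * b <= t ^+ 2 * a) -> b = 0.
Proof.
move=> H; have := H (b / (1 + `|a|)).
have ha : 0 < 1 + `|a| by rewrite ltr_pwDl.
set u := b / (1 + `|a|).
have hu : b = u * (1 + `|a|) by rewrite /u divfK // gt_eqF.
rewrite hu => {}H.
have : u = 0.
  have : u ^+ 2 * (1 + `|a| - a) <= 0 by nra.
  have : 1 <= 1 + `|a| - a by have := ler_norm a; lra.
  nra.
by move=> ->; rewrite mul0r.
Qed.

End Alg.
Set Implicit Arguments. Unset Strict Implicit.
Section Alg2.
Variable R : realType.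

Lemma givens_orth d (i j : 'I_d) (al be : R) : i != j ->
  al ^+ 2 + 2 * al + be ^+ 2 = 0 ->
  let E := delta_mx i i + delta_mx j j in
  let F := delta_mx j i - delta_mx i j in
  (1%:M + al *: E + be *: F)^T *m (1%:M + al *: E + be *: F) = 1%:M :> 'M[R]_d.
Proof.
move=> ij hc E F.
have ji : j != i by rewrite eq_sym.
have dd : forall (a b c e : 'I_d), delta_mx a b *m delta_mx c e = (if b == c then delta_mx a e else 0 :> 'M[R]_d).
  by move=> a b c e; rewrite mul_delta_mx_cond; case: (b == c).
rewrite /E /F !linearD /= !linearZ /= trmx1 ?linearD /= ?linearN /= !trmx_delta.
rewrite ?(mulmxDl, mulmxBl, mul1mx, mulmx1, mulmxDr, mulmxBr, mulNmx, mulmxN, scalemxAr, scalemxAl).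
rewrite -?(scalemxAl, scalemxAr) ?dd ?eqxx ?(negPf ij) ?(negPf ji).
apply/matrixP => a b; rewrite !mxE.
move: ((a == i) && (b == i))%:R ((a == j) && (b == j))%:R ((a == i) && (b == j))%:R ((a == j) && (b == i))%:R (a == b)%:R => p q u w o.
apply/eqP; rewrite -subr_eq0; apply/eqP.
transitivity ((al ^+ 2 + 2 * al + be ^+ 2) * (p + q)); first ring.
by rewrite hc mul0r.
Qed.

Lemma mdot_stiefel d r (u : 'M[R]_(d, r)) : stiefel u -> mdot u u = r%:R.
Proof. by rewrite /stiefel /mdot mxtrace_mulC => ->; rewrite mxtrace1. Qed.

Lemma proj_ineq d r (x x' y : 'M[R]_(d, r)) : is_proj_St x x' -> stiefel y ->
  mdot x y <= mdot x x'.
Proof.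
move=> [sx' H] sy; have := H y sy.
rewrite /frob ler_sqrt ?mdot_ge0 //.
rewrite !(mdotDl, mdotDr, mdotNl, mdotNr) (mdot_stiefel sx') (mdot_stiefel sy).
rewrite (mdotC y x) (mdotC x' x); lra.
Qed.

Lemma proj_sym d r (x x' : 'M[R]_(d, r)) : is_proj_St x x' ->
  (x *m x'^T)^T = x *m x'^T.
Proof.
move=> hp; have sx' := hp.1.
set K := x *m x'^T.
apply/matrixP => i j; rewrite mxE.
have [<-|ij] := eqVneq i j; first by [].
suff hz : K j i - K i j = 0 by lra.
apply: (@quad_zero _ (K i i + K j j)) => t.
have ht : 0 < 1 + t ^+ 2 by rewrite ltr_pwDl // sqr_ge0.
pose al := - (2 * t ^+ 2) / (1 + t ^+ 2).
pose be := 2 * t / (1 + t ^+ 2).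
have hc : al ^+ 2 + 2 * al + be ^+ 2 = 0.
  rewrite /al /be; field; by rewrite gt_eqF.
have /= hQ := givens_orth ij hc.
set Q := (1%:M + _ + _) in hQ.
have sy : stiefel (Q *m x').
  by rewrite /stiefel trmx_mul -mulmxA (mulmxA Q^T) hQ mul1mx.
have := proj_ineq hp sy.
rewrite /mdot trmx_mul mulmxA -/K /Q !linearD /= !linearZ /= trmx1 ?linearD /= ?linearN /= !trmx_delta.
rewrite ?(mulmxDr, mulmxN, mulmx1, scalemxAr) -?scalemxAr.
rewrite ?(mxtraceD, raddfN, mxtraceZ) /= !tr_mul_delta.
move=> h.
have h2 : al * (K i i + K j j) + be * (K j i - K i j) <= 0 by lra.
have e : (al * (K i i + K j j) + be * (K j i - K i j)) * (1 + t ^+ 2) =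
   2 * (t * (K j i - K i j) - t ^+ 2 * (K i i + K j j)).
  rewrite /al /be; field; by rewrite gt_eqF.
have : (al * (K i i + K j j) + be * (K j i - K i j)) * (1 + t ^+ 2) <= 0.
  by rewrite mulr_le0_ge0 // ltW.
rewrite e; lra.
Qed.
End Alg2.
Set Implicit Arguments. Unset Strict Implicit.
Section Lim.
Variable R : realType.
Local Notation Fl := ((0:R)^')%classic.

Lemma ent_cvg m n (M : R -> 'M[R]_(m, n)) (M0 : 'M[R]_(m, n)) :
  (M h @[h --> Fl] --> M0)%classic -> forall i j, (M h i j @[h --> Fl] --> M0 i j)%classic.
Proof.
move=> H i j.
exact: (cvg_comp _ _ H (@coord_continuous R m n i j M0)).
Qed.

Definition ecvg m n (M : R -> 'M[R]_(m, n)) (M0 : 'M[R]_(m, n)) :=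
  forall i j, (M h i j @[h --> Fl] --> M0 i j)%classic.

Lemma ecvg_mul m n p (A : R -> 'M[R]_(m, n)) (B : R -> 'M[R]_(n, p)) A0 B0 :
  ecvg A A0 -> ecvg B B0 -> ecvg (fun h => A h *m B h) (A0 *m B0).
Proof.
move=> hA hB i j; rewrite mxE; under eq_cvg do rewrite mxE.
apply: (cvg_big (@add_continuous R^o)) => k _.
exact: cvgM.
Qed.

Lemma ecvg_tr m n (A : R -> 'M[R]_(m, n)) A0 :
  ecvg A A0 -> ecvg (fun h => (A h)^T) A0^T.
Proof. by move=> hA i j; rewrite mxE; under eq_cvg do rewrite mxE; exact: hA. Qed.

Lemma ecvg_sym n (A : R -> 'M[R]_n) A0 :
  ecvg A A0 -> ecvg (fun h => msym (A h)) (msym A0).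
Proof.
move=> hA i j; rewrite !mxE; under eq_cvg do rewrite !mxE.
apply: cvgM; first exact: cvg_cst.
by apply: cvgD; exact: hA.
Qed.

Lemma mdot_cvg m n (A B : R -> 'M[R]_(m, n)) A0 B0 :
  ecvg A A0 -> ecvg B B0 -> (mdot (A h) (B h) @[h --> Fl] --> mdot A0 B0)%classic.
Proof.
move=> hA hB; rewrite mdotE; under eq_cvg do rewrite mdotE.
apply: (cvg_big (@add_continuous R^o)) => i _.
apply: (cvg_big (@add_continuous R^o)) => j _.
exact: cvgM.
Qed.


Lemma D_merit d r (f : 'M[R]_(d, r) -> R) gamma (x' v : 'M[R]_(d, r)) :
  C2 f -> stiefel x' ->
  'D_v (merit f gamma) x' = 'D_v f x' -
     2^-1 * mdot (msym (x'^T *m grad f x')) (v^T *m x' + x'^T *m v).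
Proof.
move=> [df [dg _]] sx.
have hf : derivable f x' v := @diff_derivable _ _ _ _ _ v (df x').
set G := grad f.
set D := v^T *m x' + x'^T *m v; set E := v^T *m v.
have key : {near Fl, (fun h => h^-1 *: ((f \o shift x') (h *: v) - f x')
    - 2^-1 * mdot (msym ((h *: v + x')^T *m G (h *: v + x'))) (D + h *: E)
    + gamma / 4 * (h * mdot (D + h *: E) (D + h *: E))) =1
   (fun h => h^-1 *: ((merit f gamma \o shift x') (h *: v) - merit f gamma x'))}.
  near=> h.
  have hn : h != 0 by near: h; exact: nbhs_dnbhs_neq.
  rewrite /= /merit sx subrr mdot0r /frob mdot0r sqrtr0 expr0n /= mulr0 mulr0 subr0 addr0.
  have hC : (h *: v + x')^T *m (h *: v + x') - 1%:M = h *: (D + h *: E).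
    rewrite /D /E ?linearD /= ?linearZ /= ?(mulmxDl, mulmxDr) -?(scalemxAl, scalemxAr) ?linearZ /= sx.
    rewrite !scalerDr !scalerA; apply/matrixP => a b; rewrite !mxE; ring.
  rewrite hC sqr_sqrtr ?mdot_ge0 // !mdotZr !mdotZl.
  have sc : forall a b : R, a *: b = a * b by [].
  rewrite !sc; field; exact: hn.
apply: cvg_lim => //.
apply: cvg_trans (near_eq_cvg key) _.
have h0 : (h @[h --> Fl] --> (0:R))%classic by exact: cvg_within.
have hP : ((h *: v + x') @[h --> Fl] --> 0 *: v + x')%classic.
  by apply: cvgD; [apply: cvgZ => //; exact: cvg_cst | exact: cvg_cst].
rewrite scale0r add0r in hP.
have hG : (G (h *: v + x') @[h --> Fl] --> G x')%classic.
  exact: (cvg_comp _ _ hP (differentiable_continuous (dg x'))).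
have hY : ((D + h *: E) @[h --> Fl] --> D + 0 *: E)%classic.
  by apply: cvgD; [exact: cvg_cst | apply: cvgZ => //; exact: cvg_cst].
rewrite scale0r addr0 in hY.
have eS : ecvg (fun h => msym ((h *: v + x')^T *m G (h *: v + x'))) (msym (x'^T *m G x')).
  apply: ecvg_sym; apply: ecvg_mul; first apply: ecvg_tr; exact: ent_cvg.
have eY := ent_cvg hY.
have -> : 'D_v f x' - 2^-1 * mdot (msym (x'^T *m G x')) D = 'D_v f x' - 2^-1 * mdot (msym (x'^T *m G x')) D + gamma / 4 * (0 * mdot D D) by rewrite mul0r mulr0 addr0.
apply: cvgD; last by apply: cvgM; [exact: cvg_cst | apply: cvgM => //; exact: mdot_cvg].
apply: cvgB; first exact: hf.
apply: cvgM; [exact: cvg_cst | exact: mdot_cvg].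
Unshelve. all: by end_near.
Qed.
End Lim.
Unset Implicit Arguments. Set Strict Implicit.

Theorem lemma9 (R : realType) (d r : nat) (f : 'M[R]_(d, r) -> R)
  (gamma eps : R) (x x' : 'M[R]_(d, r)) :
  C2 f -> 0 < gamma -> 0 < eps -> eps < 3 / 4 ->
  stiefel_eps eps x -> is_proj_St x x' ->
  mdot (grad (merit f gamma) x') (x - x') = 0.
Proof.
move=> hC2 _ _ _ _ hp; have sx : x'^T *m x' = 1%:M := hp.1.
set G := grad f x'; set T := x'^T *m G; set S := msym T.
have hS : S^T = S by rewrite /S /msym linearZ /= linearD /= trmxK addrC.
have hgrad : grad (merit f gamma) x' = G - x' *m S.
  apply/matrixP => i j; rewrite {1}/grad mxE (D_merit gamma (delta_mx i j) hC2 hp.1) -/G -/T -/S.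
  rewrite [in RHS]mxE [X in _ = _ + X]mxE; congr (_ - _); first by rewrite /G /grad mxE.
  rewrite mdotDr /mdot !trmx_mul trmxK trmx_delta.
  rewrite mulmxA tr_mul_delta mulmxA mxtrace_mulC mulmxA tr_mul_delta.
  rewrite trmxK.
  have -> : (S *m x'^T) j i = (x' *m S) i j by rewrite -{1}hS -trmx_mul mxE.
  by field.
have hK := proj_sym hp.
rewrite trmx_mul trmxK in hK.
set M := x'^T *m x.
have hx1 : x = x' *m M^T.
  by rewrite trmx_mul trmxK mulmxA hK -mulmxA sx mulmx1.
have hM : M^T = M.
  by rewrite {2}/M hx1 mulmxA sx mul1mx.
have hx : x = x' *m M by rewrite {1}hx1 hM.
set P := M - 1%:M.
have hP : P^T = P by rewrite /P linearB /= hM trmx1 //.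
have -> : x - x' = x' *m P by rewrite /P mulmxBr mulmx1 -hx.
rewrite hgrad mdotDl mdotNl /mdot !trmx_mul hP.
rewrite mulmxA mxtrace_mulC mulmxA -/T.
rewrite [X in _ - X]mxtrace_mulC -mulmxA (mulmxA x'^T) sx mul1mx [X in _ - X]mxtrace_mulC.
rewrite /S /msym -scalemxAl mxtraceZ mulmxDl mxtraceD.
have -> : \tr (T^T *m P) = \tr (T *m P).
  by rewrite -mxtrace_tr trmx_mul hP trmxK mxtrace_mulC.
set a := \tr (T *m P); by field.
Qed.
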